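(* Let $\mathbb{F}$ be a field of characteristic $2$ and $n\ge 1$. Let $A \in \operatorname{M}_n(\mathbb{F})$ be an invertible alternating matrix, and set $S := \begin{bmatrix} 1 & 0_{1\times n} \\ 0_{n\times 1} & A\end{bmatrix}$. Let $M \in \operatorname{M}_n(\mathbb{F})$ be nilpotent and $A$-symmetric. Then the following are equivalent: (i) $M$ is $A$-alternating; (ii) for every $X \in \mathbb{F}^n$, the matrix $M_X := \begin{bmatrix} 0 & X^T A^T \\ X & M \end{bmatrix} \in \operatorname{M}_{n+1}(\mathbb{F})$ is nilpotent. Moreover, if (i) holds then $M_X$ is $S$-alternating for every $X \in \mathbb{F}^n$.
   Context: A square matrix $A$ is alternating if $X^T A X = 0$ for all column vectors $X$ (in characteristic $2$: symmetric with zero diagonal). Given square matrices $B$ and $M$ of the same size, $M$ is $B$-symmetric (resp. $B$-alternating) if $BM$ is symmetric (resp. alternating). *)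

(* Defs.v *)
From HB Require Import structures.
From mathcomp Require Import all_boot all_order all_algebra.
Set Implicit Arguments. Unset Strict Implicit. Unset Printing Implicit Defensive.
Import GRing.Theory.
Local Open Scope ring_scope.

Definition alternating_mx (F : fieldType) (n : nat) (A : 'M[F]_n) : Prop :=
  forall X : 'cV[F]_n, X^T *m A *m X = 0.

Definition symmetric_mx (F : fieldType) (n : nat) (A : 'M[F]_n) : Prop :=
  A^T = A.

Definition B_symmetric (F : fieldType) (n : nat) (B M : 'M[F]_n) : Prop :=
  symmetric_mx (B *m M).

Definition B_alternating (F : fieldType) (n : nat) (B M : 'M[F]_n) : Prop :=
  alternating_mx (B *m M).

Definition nilpotent_mx (F : fieldType) (n : nat) (M : 'M[F]_n) : Prop :=
  exists k : nat, M ^+ k = 0.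

Definition S_mx (F : fieldType) (n : nat) (A : 'M[F]_n) : 'M[F]_(1 + n) :=
  block_mx (1%:M : 'M[F]_1) 0 0 A.

Definition MX_mx (F : fieldType) (n : nat) (A M : 'M[F]_n) (X : 'cV[F]_n)
  : 'M[F]_(1 + n) :=
  block_mx (0 : 'M[F]_1) (X^T *m A^T) X M.

(* Main.v *)
Require Import Defs.
From HB Require Import structures.
From mathcomp Require Import all_boot all_order all_algebra zify.
Import GRing.Theory.
Local Open Scope ring_scope.

Lemma entry_delta (F : fieldType) n (A : 'M[F]_n) i j :
  ((delta_mx 0 i : 'rV[F]_n) *m A *m (delta_mx j 0 : 'cV[F]_n)) 0 0 = A i j.
Proof. by rewrite -rowE -colE !mxE. Qed.

Lemma alt_sym (F : fieldType) n (A : 'M[F]_n) :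
  2%N \in [pchar F] -> alternating_mx A -> A^T = A.
Proof.
move=> c2 alt.
have key : forall X Y : 'cV[F]_n, X^T *m A *m Y + Y^T *m A *m X = 0.
  move=> X Y; have := alt (X + Y).
  by rewrite !raddfD /= !mulmxDl !alt add0r addr0 addrC.
apply/matrixP => i j; rewrite mxE.
have := congr1 (fun B : 'M[F]_1 => B 0 0) (key (delta_mx i 0) (delta_mx j 0)).
rewrite /= !trmx_delta mxE !entry_delta mxE => /eqP.
by rewrite addr_eq0 oppr_pchar2 // => /eqP ->.
Qed.

Lemma mxpowSr (F : fieldType) n (M : 'M[F]_n) k : M^+k *m M = M^+k.+1.
Proof. by rewrite exprSr mulmxE. Qed.
Lemma mxpowSl (F : fieldType) n (M : 'M[F]_n) k : M *m M^+k = M^+k.+1.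
Proof. by rewrite exprS mulmxE. Qed.

Lemma q_zero (F : fieldType) n (A M : 'M[F]_n) :
  A^T = A -> (A *m M)^T = A *m M -> alternating_mx A -> alternating_mx (A *m M) ->
  forall (X : 'cV[F]_n) j, X^T *m A *m M^+j *m X = 0.
Proof.
move=> sA sAM altA altAM X j.
have AMT : M^T *m A = A *m M by rewrite -sAM trmx_mul sA.
have pw : forall i j, A *m M^+(i + j) = (M^+i)^T *m A *m M^+j.
  elim=> [|i IH] k; first by rewrite add0n expr0 trmx1 mul1mx.
  rewrite addSnnS IH -mxpowSl !mulmxA -(mulmxA _ A M) -AMT mulmxA -trmx_mul.
  by rewrite mxpowSl.
have Ej : j = (j./2 + j./2 + odd j)%N.
  by rewrite addnn addnC odd_double_half.
rewrite Ej; case: (odd j) => /=.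
- rewrite addn1 -addnS -(mulmxA _ A) pw -mxpowSl.
  by have := altAM (M^+(j./2) *m X); rewrite trmx_mul !mulmxA.
- rewrite addn0 -(mulmxA _ A) pw.
  by have := altA (M^+(j./2) *m X); rewrite trmx_mul !mulmxA.
Qed.

Definition Tk (F : fieldType) n (B : 'rV[F]_n) (M : 'M[F]_n) (X : 'cV[F]_n) k :=
  \sum_(i < k) M^+i *m X *m (B *m M^+(k.-1 - i)).
Arguments Tk {F n}.

Lemma MX_pow (F : fieldType) n (A M : 'M[F]_n) (X : 'cV[F]_n) :
  (forall j, X^T *m A^T *m M^+j *m X = 0) -> forall k,
  (MX_mx A M X)^+k.+1 = block_mx 0 (X^T *m A^T *m M^+k) (M^+k *m X)
                                (M^+k.+1 + Tk (X^T *m A^T) M X k).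
Proof.
move=> q; elim=> [|k IH].
  by rewrite expr1 /MX_mx /Tk big_ord0 addr0 !expr1 expr0 mulmx1 mul1mx.
rewrite exprSr IH /MX_mx -mulmxE mulmx_block; congr block_mx.
- by rewrite mul0mx add0r q.
- by rewrite mul0mx add0r -mxpowSr mulmxA.
- rewrite mulmx0 add0r mulmxDl /Tk mulmx_suml big1 ?addr0 // => i _.
  by rewrite -mulmxA q mulmx0.
- rewrite mulmxDl mxpowSr /Tk mulmx_suml big_ord_recr /= subnn expr0 mulmx1.
  have -> : \sum_(i < k) M ^+ i *m X *m (X^T *m A^T *m M ^+ (k.-1 - i)) *m M
         = \sum_(i < k) M ^+ i *m X *m (X^T *m A^T *m M ^+ (k - i)).
    apply: eq_bigr => i _; rewrite -!mulmxA mxpowSr.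
    have -> : (k.-1 - i).+1 = (k - i)%N by have := ltn_ord i; lia.
    by [].
  by rewrite addrCA; congr (_ + _); rewrite addrC.
Qed.

Lemma TT (F : fieldType) n (B : 'rV[F]_n) (M : 'M[F]_n) (X : 'cV[F]_n) k :
  (forall j, B *m M^+j *m X = 0) -> Tk B M X k *m Tk B M X k = 0.
Proof.
move=> q; rewrite /Tk mulmx_suml big1 // => i _; rewrite mulmx_sumr big1 // => j _.
have -> : forall (P Q R : 'M[F]_n) (S : 'rV[F]_n), P *m X *m (B *m Q) *m (R *m X *m S)
   = P *m X *m (B *m (Q *m R) *m X) *m S by move=> P Q R S; rewrite !mulmxA.
by rewrite mulmxE -exprD q mulmx0 mul0mx.
Qed.

Lemma i_to_ii (F : fieldType) n (A M : 'M[F]_n) (X : 'cV[F]_n) :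
  nilpotent_mx M -> (forall j, X^T *m A^T *m M^+j *m X = 0) -> nilpotent_mx (MX_mx A M X).
Proof.
move=> [K MK] q; exists (K.+1 * 2)%N.
have MK1 : M^+K.+1 = 0 by rewrite exprSr MK mul0r.
rewrite exprM MX_pow // MK MK1 mulmx0 mul0mx add0r expr2 -mulmxE mulmx_block.
rewrite !mulmx0 !mul0mx !addr0 add0r TT //.
  by rewrite block_mx0.
Qed.

Lemma rec_zero (F : fieldType) (s q : nat -> F) K1 K2 :
  s 0%N = 1 -> (forall k, (K1 <= k)%N -> s k = 0) -> (forall j, (K2 <= j)%N -> q j = 0) ->
  (forall k, s k.+1 = \sum_(i < k) s i * q (k.-1 - i)%N) -> forall j, q j = 0.
Proof.
move=> s0 sK qK rec j; apply/eqP; apply/negPn/negP => qj.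
have exq : exists j, q j != 0 by exists j.
have ubq : forall j, q j != 0 -> (j <= K2)%N.
  move=> i qi; rewrite leqNgt; apply/negP => /ltnW /qK; by move/eqP: qi.
case: (ex_maxnP exq ubq) => m qm maxm.
have exs : exists k, s k != 0 by exists 0%N; rewrite s0 oner_eq0.
have ubs : forall k, s k != 0 -> (k <= K1)%N.
  move=> i si; rewrite leqNgt; apply/negP => /ltnW /sK; by move/eqP: si.
case: (ex_maxnP exs ubs) => k0 sk0 maxk.
have lt0 : (k0 < (k0 + m).+1)%N by lia.
have := rec (k0 + m).+1; rewrite (bigD1 (Ordinal lt0)) //= big1 ?addr0.
  have -> : s (k0 + m).+2 = 0.
    apply/eqP; apply/negP => /negP /maxk; lia.
  move/esym/eqP; rewrite mulf_eq0 (negPf sk0) /=.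
  have -> : ((k0 + m).+1.-1 - k0 = m)%N by lia.
  by rewrite (negPf qm).
move=> i ni.
case: (ltngtP i k0) => h.
- rewrite [q _](_ : _ = 0) ?mulr0 //.
  apply/eqP; apply/negP => /negP /maxm; lia.
- have -> : s i = 0 by apply/eqP; apply/negP => /negP /maxk; lia.
  by rewrite mul0r.
- have ei : i = Ordinal lt0 by apply: val_inj; rewrite /= h.
  by rewrite ei eqxx in ni.
Qed.

Lemma one_block (F : fieldType) n : (1 : 'M[F]_(1 + n)) = block_mx 1%:M 0 0 1%:M.
Proof. exact: scalar_mx_block. Qed.

Lemma ii_q (F : fieldType) n (A M : 'M[F]_n) (X : 'cV[F]_n) :
  nilpotent_mx M -> nilpotent_mx (MX_mx A M X) ->
  forall j, (X^T *m A^T *m M^+j *m X) 0 0 = 0.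
Proof.
move=> [K MK] [K1 NK].
set B := X^T *m A^T.
set N := MX_mx A M X.
pose s k := ulsubmx (N^+k) 0 0.
pose r k := ursubmx (N^+k).
have E : forall k, N^+k.+1 = block_mx (ulsubmx (N^+k) *m 0 + r k *m X)
     (ulsubmx (N^+k) *m B + r k *m M) (dlsubmx (N^+k) *m 0 + drsubmx (N^+k) *m X)
     (dlsubmx (N^+k) *m B + drsubmx (N^+k) *m M).
  move=> k; rewrite exprSr -mulmxE; set P := N^+k; rewrite -[X in X *m _ = _]submxK.
  by rewrite /N /MX_mx mulmx_block.
have rE : forall k, r k = \sum_(i < k) s i *: (B *m M^+(k.-1 - i)).
  elim=> [|k IH].
    by rewrite big_ord0 /r expr0 one_block block_mxKur.
  rewrite {1}/r E block_mxKur IH big_ord_recr /= subnn expr0 mulmx1.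
  rewrite {1}[ulsubmx _]mx11_scalar mul_scalar_mx mulmx_suml addrC.
  congr (_ + _); apply: eq_bigr => i _.
  rewrite -scalemxAl -mulmxA mxpowSr.
  by have -> : (k.-1 - i).+1 = (k - i)%N by have := ltn_ord i; lia.
apply: (@rec_zero F s _ K1 K).
- by rewrite /s expr0 one_block block_mxKul mxE.
- move=> k Kk; rewrite /s -(subnKC Kk) exprD NK mul0r.
  by rewrite -block_mx0 block_mxKul mxE.
- move=> j Kj; rewrite -(subnKC Kj) exprD MK mul0r mulmx0 mul0mx mxE //.
- move=> k; rewrite {1}/s E block_mxKul mulmx0 add0r rE mulmx_suml summxE.
  apply: eq_bigr => i _; rewrite -scalemxAl mxE.
  by [].
Qed.

Lemma tr11 (F : fieldType) (C : 'M[F]_1) : C^T = C.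
Proof. by apply/matrixP => i j; rewrite !ord1 mxE. Qed.

Lemma S_alt (F : fieldType) n (A M : 'M[F]_n) (X : 'cV[F]_n) :
  2%N \in [pchar F] -> alternating_mx (A *m M) ->
  B_alternating (S_mx A) (MX_mx A M X).
Proof.
move=> c2 altAM Y; rewrite /S_mx /MX_mx mulmx_block.
rewrite !mulmx0 !mul0mx !addr0 !add0r mul1mx.
rewrite -[Y]vsubmxK tr_col_mx mul_row_block mul_row_col.
rewrite !mulmx0 !add0r mulmxDl altAM addr0.
set t := usubmx Y; set Z := dsubmx Y.
have -> : t^T *m (X^T *m A^T) *m Z = (Z^T *m (A *m X) *m t)^T.
  by rewrite !trmx_mul !trmxK !mulmxA.
by rewrite tr11; apply/matrixP => i j; rewrite !mxE addrr_pchar2.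
Qed.

Theorem lemma3p1 (F : fieldType) (n : nat) (A M : 'M[F]_n) :
  2%N \in [pchar F] ->
  (1 <= n)%N ->
  A \in unitmx ->
  alternating_mx A ->
  nilpotent_mx M ->
  B_symmetric A M ->
  (B_alternating A M <-> forall X : 'cV[F]_n, nilpotent_mx (MX_mx A M X)) /\
  (B_alternating A M -> forall X : 'cV[F]_n, B_alternating (S_mx A) (MX_mx A M X)).
Proof.
move=> c2 _ _ altA nilM symAM.
have sA := @alt_sym F n A c2 altA.
split; last by move=> altAM X; exact: S_alt.
split.
- move=> altAM X; apply: i_to_ii => // j; rewrite sA; exact: q_zero.
- move=> H X; have := @ii_q F n A M X nilM (H X) 1; rewrite sA expr1 => h.
  by apply/matrixP => i j; rewrite !ord1 [RHS]mxE -h !mulmxA.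
Qed.
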